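(* Assume $n\ge3$. Let $|\Psi^{\mathrm h}_0\rangle$ and $|\Psi^{\mathrm c}_0\rangle$ be initial states with $p^{\mathrm h}_0(0)>0$, $p^{\mathrm c}_0(0)>0$, $D_I^{\mathrm h}(0)>D_I^{\mathrm c}(0)$, and additionally $p^{\mathrm h}_i(0)=0$ for all $i>2$ and $p^{\mathrm c}_j(0)=0$ for all $j>1$. With $r^{\mathrm h},r^{\mathrm c},s^{\mathrm h}$ as defined in the context, and $\epsilon>0$, the Mpemba effect with respect to $D_I$ occurs before the threshold $\epsilon$ if and only if $r^{\mathrm h}<r^{\mathrm c}$ and $$\epsilon<\left(1+\frac{1}{r^{\mathrm c}}\left(\frac{s^{\mathrm h}-r^{\mathrm h}}{r^{\mathrm c}-r^{\mathrm h}}\right)^{\frac{E_1}{E_2-E_1}}\right)^{-1}.$$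
   Context: Let $H$ be a Hamiltonian on an $n$-dimensional Hilbert space with nondegenerate eigenvalues $0=E_0<E_1<\dots<E_{n-1}$ and orthonormal eigenvectors $|E_i\rangle$. QITE of a pure state $|\Psi_0\rangle$ is $|\Psi(\tau)\rangle=e^{-H\tau}|\Psi_0\rangle/\sqrt{\langle\Psi_0|e^{-2H\tau}|\Psi_0\rangle}$, with populations $p_i(\tau)=|\langle E_i|\Psi(\tau)\rangle|^2=p_i(0)e^{-2E_i\tau}/\sum_j p_j(0)e^{-2E_j\tau}$, and ground-state infidelity $D_I(\tau)=1-p_0(\tau)$. Superscripts $\mathrm h,\mathrm c$ refer to the trajectories from $|\Psi^{\mathrm h}_0\rangle$, $|\Psi^{\mathrm c}_0\rangle$. Define $r^{\mathrm h}=p^{\mathrm h}_1(0)/p^{\mathrm h}_0(0)$, $r^{\mathrm c}=p^{\mathrm c}_1(0)/p^{\mathrm c}_0(0)$, $s^{\mathrm h}=(1-p^{\mathrm h}_0(0))/p^{\mathrm h}_0(0)$. ''The Mpemba effect occurs before the threshold $\epsilon$'' means: there exists $\tau^\star>0$ with $D_I^{\mathrm h}(\tau^\star)=D_I^{\mathrm c}(\tau^\star)>\epsilon$ and $D_I^{\mathrm h}(\tau)<D_I^{\mathrm c}(\tau)$ for all $\tau>\tau^\star$. *)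

(* Defs.v *)
From Stdlib Require Import Reals Lra.
Open Scope R_scope.

Fixpoint rsum (f : nat -> R) (n : nat) : R :=
  match n with
  | O => 0
  | S k => rsum f k + f k
  end.

(* QITE populations in the energy eigenbasis:
   p_i(tau) = p_i(0) e^{-2 E_i tau} / sum_{j<n} p_j(0) e^{-2 E_j tau}.
   [p0 i] = |<E_i|Psi_0>|^2 are the initial populations. *)
Definition pop (n : nat) (E p0 : nat -> R) (i : nat) (tau : R) : R :=
  p0 i * exp (-2 * E i * tau) / rsum (fun j => p0 j * exp (-2 * E j * tau)) n.

Definition DI (n : nat) (E p0 : nat -> R) (tau : R) : R := 1 - pop n E p0 0 tau.

Definition is_pop_vector (n : nat) (p0 : nat -> R) : Prop :=
  (forall i, (i < n)%nat -> 0 <= p0 i) /\ rsum p0 n = 1.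

Definition is_spectrum (n : nat) (E : nat -> R) : Prop :=
  E 0%nat = 0 /\ forall i, (S i < n)%nat -> E i < E (S i).

Definition mpemba_before (n : nat) (E ph pc : nat -> R) (eps : R) : Prop :=
  exists ts, 0 < ts /\ DI n E ph ts = DI n E pc ts /\ DI n E ph ts > eps /\
    forall t, t > ts -> DI n E ph t < DI n E pc t.

(* Main.v *)
Require Import Defs.
From Stdlib Require Import Reals Lra Lia Psatz.
Open Scope R_scope.

Lemma rsum_trunc f m k : (forall i, (m <= i)%nat -> (i < m + k)%nat -> f i = 0) ->
  rsum f (m + k) = rsum f m.
Proof.
  induction k; intros H. - now rewrite Nat.add_0_r.
  - rewrite Nat.add_succ_r. simpl. rewrite IHk. rewrite (H (m+k)%nat) by lia. ring.
    intros; apply H; lia.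
Qed.

Lemma div_pos_iff P Q : 0 < Q -> (0 < P / Q <-> 0 < P).
Proof.
  intros HQ; split; intros H.
  - replace P with (P / Q * Q) by (field; lra). nra.
  - apply Rdiv_lt_0_compat; auto.
Qed.

Theorem mainTheorem3 (n : nat) (E ph pc : nat -> R) (eps : R) :
  (3 <= n)%nat ->
  is_spectrum n E ->
  is_pop_vector n ph -> is_pop_vector n pc ->
  0 < ph 0%nat -> 0 < pc 0%nat ->
  DI n E ph 0 > DI n E pc 0 ->
  (forall i, (2 < i < n)%nat -> ph i = 0) ->
  (forall j, (1 < j < n)%nat -> pc j = 0) ->
  0 < eps ->
  let rh := ph 1%nat / ph 0%nat in
  let rc := pc 1%nat / pc 0%nat in
  let sh := (1 - ph 0%nat) / ph 0%nat in
  (mpemba_before n E ph pc eps <->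
   (rh < rc /\
    eps < / (1 + (1 / rc) * Rpower ((sh - rh) / (rc - rh)) (E 1%nat / (E 2%nat - E 1%nat))))).
Proof.
  intros Hn [HE0 HE] [Hh0 Hh1] [Hc0 Hc1] ha hal HDI0 Hhz Hcz Heps rh rc sh.
  assert (E01 : E 0%nat < E 1%nat) by (apply HE; lia).
  assert (E12 : E 1%nat < E 2%nat) by (apply HE; lia).
  assert (Sh : forall f, (forall i, (2<i<n)%nat -> f i = 0) -> rsum f n = f 0%nat + f 1%nat + f 2%nat).
  { intros f Hf. replace n with (3 + (n-3))%nat by lia. rewrite rsum_trunc. simpl; ring.
    intros; apply Hf; lia. }
  assert (Sc : forall f, (forall i, (1<i<n)%nat -> f i = 0) -> rsum f n = f 0%nat + f 1%nat).
  { intros f Hf. replace n with (2 + (n-2))%nat by lia. rewrite rsum_trunc. simpl; ring.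
    intros; apply Hf; lia. }
  assert (Hsum : ph 0%nat + ph 1%nat + ph 2%nat = 1).
  { rewrite <- Hh1. symmetry. apply Sh. auto. }
  assert (b0 : 0 <= ph 1%nat) by (apply Hh0; lia).
  assert (c0 : 0 <= ph 2%nat) by (apply Hh0; lia).
  assert (be0 : 0 <= pc 1%nat) by (apply Hc0; lia).
  set (a := ph 0%nat) in *. set (b := ph 1%nat) in *. set (c := ph 2%nat) in *.
  set (al := pc 0%nat) in *. set (be := pc 1%nat) in *.
  set (D := E 2%nat - E 1%nat).
  assert (HD : 0 < D) by (unfold D; lra).
  assert (Hexp2 : forall t, exp (-2 * E 2%nat * t) = exp (-2 * E 1%nat * t) * exp (-2 * D * t)).
  { intros t. rewrite <- exp_plus. f_equal. unfold D; ring. }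
  assert (DIh : forall t, DI n E ph t =
     1 - a / (a + b * exp (-2 * E 1%nat * t) + c * (exp (-2 * E 1%nat * t) * exp (-2 * D * t)))).
  { intros t. unfold DI, pop. rewrite Sh. rewrite HE0. replace (-2*0*t) with 0 by ring.
    rewrite exp_0, Hexp2. fold a b c. replace (a*1) with a by ring. reflexivity.
    intros i Hi; rewrite Hhz; [ring|lia]. }
  assert (DIc : forall t, DI n E pc t = 1 - al / (al + be * exp (-2 * E 1%nat * t))).
  { intros t. unfold DI, pop. rewrite Sc. rewrite HE0. replace (-2*0*t) with 0 by ring.
    rewrite exp_0. fold al be. replace (al*1) with al by ring. reflexivity.
    intros i Hi; rewrite Hcz; [ring|lia]. }
  set (K := a * be - al * b). set (C := al * c).
  assert (C0 : 0 <= C) by (unfold C; nra).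
  set (h := fun t => K - C * exp (-2 * D * t)).
  assert (Claim : forall t, (DI n E ph t < DI n E pc t <-> 0 < h t) /\
                            (DI n E ph t = DI n E pc t <-> h t = 0)).
  { intros t. rewrite DIh, DIc. unfold h.
    set (x := exp (-2 * E 1%nat * t)). set (ee := exp (-2 * D * t)).
    assert (xp : 0 < x) by apply exp_pos. assert (ep : 0 < ee) by apply exp_pos.
    set (Shv := a + b * x + c * (x * ee)). set (Scv := al + be * x).
    assert (0 <= b * x) by (apply Rmult_le_pos; lra). assert (0 < x * ee) by (apply Rmult_lt_0_compat; lra).
    assert (0 <= c * (x * ee)) by (apply Rmult_le_pos; lra). assert (0 <= be * x) by (apply Rmult_le_pos; lra).
    assert (Shp : 0 < Shv) by (unfold Shv; lra). assert (Scp : 0 < Scv) by (unfold Scv; lra).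
    set (u := a / Shv). set (v := al / Scv).
    assert (Hid : (v - u) * (Scv * Shv) = - (x * (K - C * ee))).
    { unfold u, v, Shv, Scv, K, C. field. split; lra. }
    assert (P0 : 0 < Scv * Shv) by nra.
    set (P := Scv * Shv) in *. set (hh := K - C * ee) in *.
    split; split; intros HH.
    - assert (Hq : (v - u) * P < 0) by nra. nra.
    - assert (Hq : x * hh > 0) by nra. assert (Hq2 : (v - u) * P < 0) by nra. nra.
    - assert (Hq : (v - u) * P = 0) by (replace v with u by lra; ring).
      assert (Hq2 : x * hh = 0) by lra.
      destruct (Rmult_integral _ _ Hq2); lra.
    - assert (Hq : (v - u) * P = 0) by (rewrite Hid, HH; ring).
      destruct (Rmult_integral _ _ Hq); lra. }
  assert (Hrr : rc - rh = K / (a * al)) by (unfold rc, rh, K; field; lra).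
  assert (HrK : rh < rc <-> 0 < K).
  { rewrite <- (div_pos_iff K (a*al)) by nra. rewrite <- Hrr. lra. }
  assert (H0 : h 0 < 0).
  { destruct (Claim 0) as [C1 C2].
    destruct (Rtotal_order (h 0) 0) as [|[|]]; auto.
    - apply C2 in H; lra.
    - apply C1 in H; lra. }
  assert (H0' : K < C).
  { unfold h in H0. replace (-2 * D * 0) with 0 in H0 by ring. rewrite exp_0 in H0. lra. }
  assert (Key : 0 < K ->
     let ts0 := ln (C / K) / (2 * D) in
     (forall t, 0 < h t <-> ts0 < t) /\ (forall t, h t = 0 <-> t = ts0) /\
     DI n E pc ts0 = / (1 + (1 / rc) * Rpower ((sh - rh) / (rc - rh)) (E 1%nat / (E 2%nat - E 1%nat)))).
  { intros HK ts0.
    assert (Cp : 0 < C) by lra.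
    assert (Ets : C * exp (-2 * D * ts0) = K).
    { replace (-2 * D * ts0) with (- ln (C / K)) by (unfold ts0; field; lra).
      rewrite exp_Ropp, exp_ln. field; lra. apply Rdiv_lt_0_compat; lra. }
    assert (hE : forall t, h t = C * (exp (-2 * D * ts0) - exp (-2 * D * t))).
    { intros t. unfold h. rewrite <- Ets at 1. ring. }
    split; [|split].
    - intros t; rewrite hE; split; intros H.
      + assert (exp (-2 * D * t) < exp (-2 * D * ts0)) by nra.
        apply exp_lt_inv in H1. nra.
      + assert (exp (-2 * D * t) < exp (-2 * D * ts0)) by (apply exp_increasing; nra). nra.
    - intros t; rewrite hE; split; intros H.
      + assert (exp (-2 * D * t) = exp (-2 * D * ts0)).
        { destruct (Rmult_integral _ _ H); lra. }
        apply exp_inv in H1.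
        apply (Rmult_eq_reg_l (-2 * D)); [lra|nra].
      + subst t; ring.
    - assert (HR : (sh - rh) / (rc - rh) = C / K).
      { rewrite Hrr. unfold sh, rh, C. replace (1 - a) with (b + c) by lra. field.
        split; [lra|]. split; lra. }
      rewrite HR. fold D. rewrite DIc. unfold Rpower.
      set (Q := exp (E 1%nat / D * ln (C / K))).
      assert (Qp : 0 < Q) by apply exp_pos.
      assert (xQ : exp (-2 * E 1%nat * ts0) = / Q).
      { unfold Q. rewrite <- exp_Ropp. f_equal. unfold ts0; field; lra. }
      rewrite xQ.
      assert (bep : 0 < be).
      { unfold K in HK. destruct (Rle_lt_dec be 0); [|auto]. assert (be = 0) by lra. nra. }
      unfold rc. fold al be. field. repeat split; try lra.
      intro Hc. assert (0 < be * Q) by nra. nra. }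
  split.
  - intros [ts [tsp [Heq [Hgt Hlt]]]].
    assert (h1 : 0 < h (ts + 1)) by (apply (proj1 (Claim (ts+1))); apply Hlt; lra).
    assert (HK : 0 < K).
    { unfold h in h1. assert (0 < exp (-2 * D * (ts + 1))) by apply exp_pos. nra. }
    split; [now apply HrK|].
    destruct (Key HK) as [K1 [K2 K3]]. change (E 2%nat - E 1%nat) with D in K3.
    assert (hts : h ts = 0) by (apply (proj2 (Claim ts)); auto).
    apply K2 in hts. rewrite <- K3, <- hts, <- Heq. lra.
  - intros [Hr Hv]. apply HrK in Hr.
    destruct (Key Hr) as [K1 [K2 K3]]. change (E 2%nat - E 1%nat) with D in K3.
    set (ts0 := ln (C / K) / (2 * D)) in *.
    assert (tsp : 0 < ts0).
    { destruct (Rtotal_order 0 ts0) as [|[|]]; auto.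
      - assert (h 0 = 0) by (apply K2; auto). lra.
      - assert (0 < h 0) by (apply K1; auto). lra. }
    exists ts0. assert (Heq : DI n E ph ts0 = DI n E pc ts0).
    { apply (proj2 (Claim ts0)). apply K2; auto. }
    split; [auto|split; [auto|split]].
    + rewrite Heq, K3. lra.
    + intros t Ht. apply (proj1 (Claim t)). apply K1. lra.
Qed.
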